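(* Let $X=(X_1,\dots,X_d)$ be a Gaussian random field on $\mathbb{R}^n$ with $X_1,\dots,X_d$ independent, centered, with almost surely continuous sample paths, let $f\colon\mathbb{R}^n\to\mathbb{R}^d$ be Borel, let $A\subset\mathbb{R}^n$ be an analytic set on which $X$ is regular, and let $\mu\in\mathcal{P}_c(A)$. Then $$\dim_{P,X+f}\mu=\sup\Big\{\gamma:\ \liminf_{r\to0+}r^{-\gamma}\int_{\mathbb{R}^n}H_X^f(t,s,r)\,d\mu(s)=0\text{ for }\mu\text{-a.e. }t\in\mathbb{R}^n\Big\},$$ $$\dim_{P,(X+f)^*}\mu=\sup\Big\{\gamma:\ \liminf_{r\to0+}r^{-\gamma}\int_{D(t,r)}H_X^f(t,s,r)\,d\mu(s)=0\text{ for }\mu\text{-a.e. }t\in\mathbb{R}^n\Big\}.$$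
   Context: $\|\cdot\|$ denotes the maximum norm, $D(t,r)$ the closed max-norm ball in $\mathbb{R}^n$. $\rho_i(t,s)=\sqrt{\mathbb{E}(X_i(t)-X_i(s))^2}$; $N$ is a standard normal variable; $f_i$ is the $i$th coordinate of $f$. $H_X^f(t,s,r)=\mathbb{P}(\|(X+f)(t)-(X+f)(s)\|\le r)=\prod_{i=1}^d\mathbb{P}(\rho_i(t,s)N\in B(f_i(t)-f_i(s),r))$. $h^*(t)=(t,h(t))$. $\mathcal{P}_c(A)$: Borel probability measures with compact support in $A$; $\mu_Z=\mu\circ Z^{-1}$. For a jointly measurable random map $Z$, $\dim_{P,Z}\mu=\sup\{\gamma: \liminf_{r\to0+}r^{-\gamma}\mathbb{E}(\mu_Z(B(Z(t),r)))=0 \text{ for }\mu\text{-a.e. } t\}$ with $B$ the closed Euclidean ball. $X$ is regular on $A$ if $A=\bigcup_k A_k$ where for all $k,N\in\mathbb{N}^+$ there is $c>0$ with $\rho_i(t,s)\le c\log^{-N}(1/|t-s|)$ for $t,s\in A_k$, $1\le i\le d$. *)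

(* Defs.v *)
From HB Require Import structures.
From mathcomp Require Import all_boot all_order all_algebra.
From mathcomp Require Import all_classical all_reals all_analysis.
Set Implicit Arguments. Unset Strict Implicit. Unset Printing Implicit Defensive.
Import Order.TTheory GRing.Theory Num.Theory.
Import numFieldNormedType.Exports.
Local Open Scope classical_set_scope.
Local Open Scope ring_scope.

(** R^n with its Borel sigma-algebra (generated by the open sets of 'rV[R]_n,
    whose norm is the max norm [mx_norm]).  The carrier is 'rV[R]_n. *)
Definition Rn (R : realType) (n : nat) := g_sigma_algebraType (@open 'rV[R]_n).

Definition normal_law {dO} {O : measurableType dO} {R : realType}
  (P : probability O R) (Y : O -> R) (m s : R) : Prop :=
  measurable_fun setT Y /\ 0 <= s /\
  forall B : set R, measurable B ->
    P (Y @^-1` B) = (if s == 0 then \d_m B else normal_prob m s B).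

Definition gaussian_field {dO} {O : measurableType dO} {R : realType} {n d : nat}
  (P : probability O R) (X : 'I_d -> Rn R n -> O -> R) : Prop :=
  forall s : seq ('I_d * Rn R n * R), exists m sd : R,
    normal_law P (fun w => \sum_(p <- s) p.2 * X p.1.1 p.1.2 w) m sd.

Definition centered_field {dO} {O : measurableType dO} {R : realType} {n d : nat}
  (P : probability O R) (X : 'I_d -> Rn R n -> O -> R) : Prop :=
  forall i t, (\int[P]_w (X i t w)%:E = 0)%E.

Definition proc_sigma {dO} {O : measurableType dO} {R : realType} {n : nat}
  (Y : Rn R n -> O -> R) : set (set O) :=
  <<s [set E | exists (t : Rn R n) (B : set R), measurable B /\ E = Y t @^-1` B] >>.

Definition indep_coords {dO} {O : measurableType dO} {R : realType} {n d : nat}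
  (P : probability O R) (X : 'I_d -> Rn R n -> O -> R) : Prop :=
  forall E : 'I_d -> set O, (forall i, proc_sigma (X i) (E i)) ->
    P (\bigcap_(i in [set: 'I_d]) E i) = (\prod_(i < d) P (E i))%E.

Definition as_continuous {dO} {O : measurableType dO} {R : realType} {n d : nat}
  (P : probability O R) (X : 'I_d -> Rn R n -> O -> R) : Prop :=
  {ae P, forall w, forall i, continuous (fun t : 'rV[R]_n => X i t w)}.

Definition borel_map {R : realType} {n d : nat} (f : Rn R n -> 'rV[R]_d) : Prop :=
  forall i : 'I_d, measurable_fun setT (fun t : Rn R n => f t 0 i).

Definition rho {dO} {O : measurableType dO} {R : realType} {n d : nat}
  (P : probability O R) (X : 'I_d -> Rn R n -> O -> R) (i : 'I_d) (t s : Rn R n) : R :=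
  Num.sqrt (fine (\int[P]_w ((X i t w - X i s w) ^+ 2)%:E)%E).

Definition Xf {O : Type} {R : realType} {n d : nat}
  (X : 'I_d -> Rn R n -> O -> R) (f : Rn R n -> 'rV[R]_d) : Rn R n -> O -> 'rV[R]_d :=
  fun t w => \row_i (X i t w + f t 0 i).

Definition graphXf {O : Type} {R : realType} {n d : nat}
  (X : 'I_d -> Rn R n -> O -> R) (f : Rn R n -> 'rV[R]_d) : Rn R n -> O -> 'rV[R]_(n + d) :=
  fun t w => row_mx (t : 'rV[R]_n) (Xf X f t w).

Definition HXf {dO} {O : measurableType dO} {R : realType} {n d : nat}
  (P : probability O R) (X : 'I_d -> Rn R n -> O -> R) (f : Rn R n -> 'rV[R]_d)
  (t s : Rn R n) (r : R) : R :=
  fine (P [set w | `|Xf X f t w - Xf X f s w| <= r]).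

Definition Dball {R : realType} {n : nat} (t : Rn R n) (r : R) : set (Rn R n) :=
  [set s : Rn R n | `|(s : 'rV[R]_n) - t| <= r].

Definition eucl_dist {R : realType} {m : nat} (u v : 'rV[R]_m) : R :=
  Num.sqrt (\sum_(j < m) (u 0 j - v 0 j) ^+ 2).

Definition dimP {dO} {O : measurableType dO} {R : realType} {n m : nat}
  (P : probability O R) (mu : probability (Rn R n) R) (Z : Rn R n -> O -> 'rV[R]_m)
  : \bar R :=
  ereal_sup [set g%:E | g in [set g : R |
    {ae mu, forall t, limf_einf (fun r : R =>
        ((r `^ (- g))%:E *
         \int[P]_w mu [set s | (eucl_dist (Z s w) (Z t w) <= r)%R])%E) (0^'+) = 0%E}]].

Definition dimH {dO} {O : measurableType dO} {R : realType} {n d : nat}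
  (P : probability O R) (X : 'I_d -> Rn R n -> O -> R) (f : Rn R n -> 'rV[R]_d)
  (mu : probability (Rn R n) R) (D : Rn R n -> R -> set (Rn R n)) : \bar R :=
  ereal_sup [set g%:E | g in [set g : R |
    {ae mu, forall t, limf_einf (fun r : R =>
        ((r `^ (- g))%:E *
         \int[mu]_(s in D t r) (HXf P X f t s r)%:E)%E) (0^'+) = 0%E}]].

(** Analytic subsets of R^n: empty, or continuous images of Baire space N^N. *)
Definition analytic_set {R : realType} {n : nat} (A : set (Rn R n)) : Prop :=
  A = set0 \/ exists g : prod_topology (fun _ : nat => nat) -> 'rV[R]_n,
    continuous g /\ range g = A.

Definition regular_on {dO} {O : measurableType dO} {R : realType} {n d : nat}
  (P : probability O R) (X : 'I_d -> Rn R n -> O -> R) (A : set (Rn R n)) : Prop :=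
  exists Ak : nat -> set (Rn R n), A = \bigcup_k Ak k /\
    forall k N : nat, exists c : R, 0 < c /\
      forall (t s : Rn R n) (i : 'I_d), Ak k t -> Ak k s ->
        0 < `|(t : 'rV[R]_n) - s| < 1 ->
        rho P X i t s <= c * (ln (`|(t : 'rV[R]_n) - s|^-1)) ^- N.+1.

Definition msupport {R : realType} {n : nat} (mu : probability (Rn R n) R) : set 'rV[R]_n :=
  [set t | forall U : set 'rV[R]_n, open U -> U t -> (0 < mu U)%E].

Definition in_Pc {R : realType} {n : nat} (A : set (Rn R n)) (mu : probability (Rn R n) R) : Prop :=
  compact (msupport mu) /\ msupport mu `<=` A.

(* Main.v *)
Require Import Defs.
From HB Require Import structures.
From mathcomp Require Import all_boot all_order all_algebra.
From mathcomp Require Import all_classical all_reals all_analysis.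
From mathcomp Require Import lra.
From mathcomp Require Import measurable_realfun.
Import Order.TTheory GRing.Theory Num.Theory.
Import numFieldNormedType.Exports.
Local Open Scope classical_set_scope.
Local Open Scope ring_scope.
Section mxlemmas.
Variable R : realType.

Lemma entry_le_norm {m} (x : 'rV[R]_m) j : `|x 0 j| <= `|x|.
Proof.
rewrite [leRHS]/Num.Def.normr /= mx_normrE; apply/bigmax_geP; right => /=.
by exists (0, j).
Qed.

Lemma norm_leP {m} (x : 'rV[R]_m) e : 0 <= e ->
  (`|x| <= e <-> forall j, `|x 0 j| <= e).
Proof.
move=> e0; split => [H j|H]; first by apply: le_trans H; exact: entry_le_norm.
rewrite [leLHS]/Num.Def.normr /= mx_normrE; apply/bigmax_leP; split => // -[i j] _ /=.
by rewrite (ord1 i).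
Qed.

Lemma norm_ltP {m} (x : 'rV[R]_m) e : 0 < e ->
  (forall j, `|x 0 j| < e) -> `|x| < e.
Proof.
move=> e0 H; rewrite [ltLHS]/Num.Def.normr /= mx_normrE; apply/bigmax_ltP; split => // -[i j] _ /=.
by rewrite (ord1 i).
Qed.

Lemma eucl_ge_norm {m} (u v : 'rV[R]_m) : `|u - v| <= eucl_dist u v.
Proof.
apply/norm_leP; first exact: sqrtr_ge0.
move=> j; rewrite !mxE -sqrtr_sqr; rewrite ler_sqrt; last first.
  by apply: sumr_ge0 => i _; exact: sqr_ge0.
rewrite (bigD1 j) //= lerDl; apply: sumr_ge0 => i _; exact: sqr_ge0.
Qed.

Lemma eucl_le_norm {m} (u v : 'rV[R]_m) : (0 < m)%N ->
  eucl_dist u v <= m%:R * `|u - v|.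
Proof.
move=> m0; rewrite /eucl_dist -[leRHS]ger0_norm ?mulr_ge0 // -sqrtr_sqr ler_sqrt; last first.
  exact: sqr_ge0.
apply: (@le_trans _ _ (\sum_(j < m) `|u - v| ^+ 2)).
  apply: ler_sum => j _; rewrite -real_normK ?num_real//.
  have := entry_le_norm (u - v) j; rewrite !mxE => h.
  by rewrite !expr2; apply: ler_pM.
rewrite sumr_const card_ord exprMn -[in leLHS]mulr_natl ler_wpM2r ?sqr_ge0//.
rewrite expr2 ler_peMl// ?ler0n// ler1n//.
Qed.

Lemma row_mx_normP {m1 m2} (a : 'rV[R]_m1) (b : 'rV[R]_m2) e : 0 <= e ->
  (`|row_mx a b| <= e <-> `|a| <= e /\ `|b| <= e).
Proof.
move=> e0; rewrite !norm_leP//; split.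
  move=> H; split => j; [have := H (lshift m2 j)|have := H (rshift m1 j)];
  by rewrite ?row_mxEl ?row_mxEr.
move=> [Ha Hb] j; rewrite -(splitK j); case: (fintype.split j) => k /=; by rewrite ?row_mxEl ?row_mxEr.
Qed.

End mxlemmas.
Arguments entry_le_norm {R m}.
Arguments norm_leP {R m}.
Arguments norm_ltP {R m}.
Arguments eucl_ge_norm {R m}.
Arguments eucl_le_norm {R m}.
Arguments row_mx_normP {R m1 m2}.

Section liminf.
Variable R : realType.
Local Open Scope ereal_scope.

Lemma near0_itv (dl : R) : (0 < dl)%R -> \forall y \near 0%R^'+, (0 < y < dl)%R.
Proof.
move=> dl0; near=> y; apply/andP; split; near: y;
  [exact: nbhs_right_gt|exact: nbhs_right_lt].
Unshelve. all: by end_near.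
Qed.

Lemma liminf0P (phi : R -> \bar R) : (forall r, (0 < r)%R -> 0 <= phi r) ->
  limf_einf phi (0%R^'+) = 0 <->
  (forall e dl : R, (0 < e)%R -> (0 < dl)%R -> exists r, (0 < r < dl)%R /\ phi r <= e%:E).
Proof.
move=> phi0; rewrite limf_einfE.
have HV1 : \forall y \near (0:R)%R^'+, (0 < y < 1)%R by apply: near0_itv; exact: ltr01.
split.
  move=> H e dl e0 dl0.
  have HV : \forall y \near 0%R^'+, (0 < y < dl)%R by apply: near0_itv.
  have : ereal_inf (phi @` [set y : R | (0 < y < dl)%R]) < e%:E.
    apply: (@le_lt_trans _ _ 0); last by rewrite lte_fin.
    rewrite -H; apply: ereal_sup_ubound; by exists [set y : R | (0 < y < dl)%R].
  move=> /ereal_inf_lt[_ [r rV <-] lt]; exists r; split => //; exact: ltW.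
move=> H; apply/eqP; rewrite eq_le; apply/andP; split.
  apply: ge_ereal_sup => _ [V FV <-].
  apply/lee_addgt0Pr => e e0; rewrite add0e.
  have [dl dl0 Hdl] : exists2 dl : R, (0 < dl)%R & forall y, (0 < y < dl)%R -> V y.
    move: FV => /nbhs_ballP[dl /= dl0 Hb]; exists dl => // y /andP[y0 ydl].
    have By : ball 0%R dl y by rewrite /ball /= sub0r normrN gtr0_norm.
    exact: (Hb y By y0).
  have [r [rdl le]] := H e dl e0 dl0.
  apply: ge_ereal_inf; exists (phi r) => //; exists r => //; exact: Hdl.
apply: (@le_trans _ _ (ereal_inf (phi @` [set y : R | (0 < y < 1)%R]))).
  apply: le_ereal_inf_tmp => _ [r /andP[r0 _] <-]; exact: phi0.
apply: ereal_sup_ubound; by exists [set y : R | (0 < y < 1)%R].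
Qed.

End liminf.

Section sandwich.
Variable R : realType.
Local Open Scope ereal_scope.

Lemma liminf_sandwich (L G : R -> \bar R) (c g : R) : (1 <= c)%R ->
  (forall r, (0 < r)%R -> 0 <= L r) -> (forall r, (0 < r)%R -> 0 <= G r) ->
  (forall r, (0 < r)%R -> G (r / c)%R <= L r) ->
  (forall r, (0 < r)%R -> L r <= G r) ->
  (limf_einf (fun r => (r `^ (- g))%:E * L r) (0%R^'+) = 0 <->
   limf_einf (fun r => (r `^ (- g))%:E * G r) (0%R^'+) = 0).
Proof.
move=> c1 L0 G0 GL LG.
have c0 : (0 < c)%R by apply: lt_le_trans c1.
rewrite !liminf0P; last 2 first.
- by move=> r r0; rewrite mule_ge0 ?lee_fin ?powR_ge0 ?G0.
- by move=> r r0; rewrite mule_ge0 ?lee_fin ?powR_ge0 ?L0.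
split => H e dl e0 dl0.
  pose K := (c `^ (- g))%R.
  have K0 : (0 < K)%R by rewrite powR_gt0.
  have [r [/andP[r0 rdl] Hr]] := H (e * K)%R dl (mulr_gt0 e0 K0) dl0.
  exists (r / c)%R; split.
    rewrite divr_gt0//=; apply: le_lt_trans rdl.
    by rewrite ler_pdivrMr// ler_peMr// ltW.
  have rE : (r `^ (- g) = (r / c) `^ (- g) * K)%R.
    by rewrite /K -powRM ?divr_ge0 ?ltW// divfK// gt_eqF.
  apply: (@le_trans _ _ (((r / c) `^ (- g))%:E * L r)).
    by apply: lee_wpmul2l; [rewrite lee_fin powR_ge0|apply: GL].
  have -> : ((r / c) `^ (- g))%R = (r `^ (- g) / K)%R.
    by rewrite rE mulfK// gt_eqF.
  rewrite EFinM [X in X * L r]muleC -muleA.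
  apply: (@le_trans _ _ ((K^-1)%:E * (e * K)%:E)).
    by apply: lee_wpmul2l; first by rewrite lee_fin invr_ge0 ltW.
  by rewrite -EFinM mulrC mulfK// gt_eqF.
have [r [/andP[r0 rdl] Hr]] := H e dl e0 dl0.
exists r; split; first by rewrite r0 rdl.
apply: le_trans Hr; apply: lee_wpmul2l; first by rewrite lee_fin powR_ge0.
exact: LG.
Qed.

End sandwich.

Section cara.
Variable R : realType.

Lemma small_inv (e : R) : 0 < e -> exists k : nat, k.+1%:R^-1 < e.
Proof.
move=> e0; exists (Num.bound e^-1).
have e1 : 0 <= e^-1 by rewrite invr_ge0 ltW.
have h := archi_boundP e1.
rewrite -[ltRHS]invrK ltf_pV2 ?posrE ?invr_gt0//.
by rewrite (lt_le_trans h)// ler_nat.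
Qed.

Lemma rat_row_dense n (s : 'rV[R]_n) e : 0 < e ->
  exists q : 'rV[rat]_n, `|map_mx ratr q - s| < e.
Proof.
move=> e0.
have H : forall j : 'I_n, exists q : rat, `|ratr q - s 0 j| < e.
  move=> j; have : s 0 j - e < s 0 j + e by rewrite ltrD2l gtrN.
  move=> /rat_in_itvoo[q]; rewrite in_itv /= => /andP[h1 h2].
  by exists q; rewrite ltr_distl h1 h2.
have [qf Hq] := fin_all_exists H.
exists (\row_j qf j); apply: norm_ltP => // j.
by rewrite !mxE.
Qed.

Variables (dO : measure_display) (O : measurableType dO) (n : nat).

Lemma mset_lt (h : O -> R) a : measurable_fun setT h -> measurable [set w | a < h w].
Proof.
move=> mh; have := mh measurableT _ (measurable_itv `]a, +oo[); rewrite setTI.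
congr measurable; apply/seteqP; split => w /=; by rewrite in_itv /= andbT.
Qed.

Lemma mset_le {d'} {T : measurableType d'} (h : T -> R) a :
  measurable_fun setT h -> measurable [set w | h w <= a].
Proof.
move=> mh; have := mh measurableT _ (measurable_itv `]-oo, a]); rewrite setTI.
congr measurable; apply/seteqP; split => w /=; by rewrite in_itv /=.
Qed.

Lemma mset_open (U : set 'rV[R]_n) : open U -> measurable (U : set (Rn R n)).
Proof. by move=> oU; apply: sub_sigma_algebra. Qed.

Lemma caratheodory (g : O -> Rn R n -> R) :
  (forall w, continuous (fun s : 'rV[R]_n => g w s)) ->
  (forall s, measurable_fun setT (fun w => g w s)) ->
  measurable_fun setT (fun p : (O * Rn R n)%type => g p.1 p.2).
Proof.
move=> cg mg.
apply: (measurability (@measurable_realfun.RGenCInfty.G R)) => [|/= _ [_] [x] -> <-].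
  exact: measurable_realfun.RGenCInfty.measurableE.
pose qv (q : 'rV[rat]_n) : 'rV[R]_n := map_mx ratr q.
pose Ak k q := [set w | x - k.+1%:R^-1 < g w (qv q)].
pose Bk k q := [set s : Rn R n | `|qv q - s| < k.+1%:R^-1].
have -> : [set: O * Rn R n] `&` (fun p => g p.1 p.2) @^-1` `[x, +oo[ =
    \bigcap_k \bigcup_q (Ak k q `*` Bk k q).
  apply/seteqP; split => -[w s] /=.
    move=> [_]; rewrite in_itv /= andbT => xg k _.
    have := cg w s; move=> /cvgr_dist_lt /(_ k.+1%:R^-1).
    rewrite invr_gt0 ltr0Sn => /(_ isT) /nbhs_ballP[dl /= dl0 Hdl].
    have m0 : 0 < Num.min dl k.+1%:R^-1 by rewrite lt_min dl0 invr_gt0 ltr0Sn.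
    have [q Hq] := @rat_row_dense n s _ m0.
    exists q => //; split => /=.
      have : ball s dl (qv q).
        by rewrite -ball_normE /= distrC (lt_le_trans Hq)// ge_min lexx.
      move=> /Hdl /=; rewrite ltr_distl => /andP[h1 h2].
      by move: h1 h2 xg; rewrite /Ak /=; set u := k.+1%:R^-1; lra.
    by rewrite /Bk /qv /= (lt_le_trans Hq)// ge_min lexx orbT.
  move=> H; split => //; rewrite in_itv /= andbT.
  rewrite leNgt; apply/negP => gx.
  pose ep := (x - g w s) / 2.
  have ep0 : 0 < ep by rewrite divr_gt0// subr_gt0.
  have := cg w s; move=> /cvgr_dist_lt /(_ ep ep0) /nbhs_ballP[dl /= dl0 Hdl].
  have m1 : 0 < Num.min dl ep by rewrite lt_min dl0 ep0.
  have [k Hk] := small_inv _ m1.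
  have [q _ [/= h1 h2]] := H k I.
  move: Hk; rewrite lt_min => /andP[hu1 hu2].
  have : ball s dl (qv q) by rewrite -ball_normE /= distrC (lt_trans h2).
  move=> /Hdl /=; rewrite ltr_distl => /andP[h3 h4].
  move: h1 h3 h4 hu2 gx; rewrite /ep /Ak /=; set u := k.+1%:R^-1; set gs := g w s; set gq := g w (qv q); lra.
apply: bigcapT_measurable => k.
apply: countable_bigcupT_measurable; first exact: countableP.
move=> q; apply: measurableX.
  exact: mset_lt.
apply: mset_open; rewrite (_ : Bk k q = ball (qv q) k.+1%:R^-1).
  by apply: ball_open; rewrite invr_gt0.
by rewrite -ball_normE.
Qed.

End cara.

Notation mfunX := measurable_realfun.measurable_funX.
Notation mfunB := measurable_realfun.measurable_funB.
Notation mfunD := measurable_realfun.measurable_funD.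
Notation mfunM := measurable_realfun.measurable_funM.
Notation mnormr := measurable_realfun.normr_measurable.
Notation mindic := measurable_realfun.measurable_indic.
Notation cont_mfun := measurable_realfun.continuous_measurable_fun.

Section generic.
Variable R : realType.

Lemma meas_eucl {d'} {T : measurableType d'} m (U V : T -> 'rV[R]_m) :
  (forall j, measurable_fun setT (fun p => U p 0 j)) ->
  (forall j, measurable_fun setT (fun p => V p 0 j)) ->
  measurable_fun setT (fun p => eucl_dist (U p) (V p)).
Proof.
move=> mU mV; rewrite /eucl_dist.
apply: measurableT_comp.
  exact: cont_mfun (@sqrt_continuous R).
apply: measurable_sum => j; apply: mfunX; exact: mfunB.
Qed.

Lemma meas_normle {d'} {T : measurableType d'} m (V : T -> 'rV[R]_m) rho :
  0 <= rho -> (forall j, measurable_fun setT (fun p => V p 0 j)) ->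
  measurable [set p | `|V p| <= rho].
Proof.
move=> rho0 mV.
have -> : [set p | `|V p| <= rho] = \bigcap_(j in [set: 'I_m]) [set p | `|V p 0 j| <= rho].
  apply/seteqP; split => p /=; rewrite norm_leP//.
    by move=> H j _; exact: H.
  by move=> H j; exact: H.
apply: fin_bigcap_measurable; first exact: finite_finset.
move=> j _; apply: mset_le.
apply: measurableT_comp; last exact: mV.
exact: mnormr.
Qed.

Local Open Scope ereal_scope.

Lemma le_int_nonmeas {d'} {T : measurableType d'} (mu : {measure set T -> \bar R})
  (f1 f2 : T -> \bar R) : (forall w, 0 <= f1 w) -> (forall w, f1 w <= f2 w) ->
  \int[mu]_w f1 w <= \int[mu]_w f2 w.
Proof.
move=> f10 f12.
have f20 : forall w, 0 <= f2 w by move=> w; exact: le_trans (f10 w) (f12 w).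
rewrite !ge0_integralE//; apply: ereal_sup_le => _ [h /= hf <-].
exists h => //= x; apply: le_trans (hf x) _.
by rewrite /patch /= !ifT ?inE.
Qed.

End generic.

Section tonelli.
Variables (R : realType) (dO : measure_display) (O : measurableType dO).
Variable (P : probability O R) (n : nat) (mu : probability (Rn R n) R).
Variable N : set O.
Hypotheses (mN : measurable N) (PN0 : P N = 0%E).
Local Open Scope ereal_scope.

Lemma ae_int (F G : O -> \bar R) : measurable_fun setT G ->
  (forall w, 0 <= F w) -> (forall w, 0 <= G w) ->
  (forall w, ~ N w -> F w = G w) -> \int[P]_w F w = \int[P]_w G w.
Proof.
move=> mG F0 G0 FG.
have mNb : measurable_fun setT (fun w => w \in N).
  apply: (measurable_fun_bool true) => //; rewrite setTI.
  rewrite (_ : _ @^-1` _ = N)//.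
  by apply/seteqP; split => w /=; [move/set_mem|move/mem_set].
pose h1 w := if w \in N then 0 else G w.
pose h2 w := if w \in N then +oo else G w.
have mh1 : measurable_fun setT h1 by apply: measurable_fun_ifT.
have mh2 : measurable_fun setT h2 by apply: measurable_fun_ifT.
have aeN (h : O -> \bar R) : (forall w, ~ N w -> h w = G w) ->
    ae_eq P setT h G.
  move=> hG; exists N; split => // w /= Hw; apply/not_notP => Nw; apply: Hw => _.
  exact: hG.
have e1 : \int[P]_w h1 w = \int[P]_w G w.
  apply: ae_eq_integral => //; apply: aeN => w Nw; rewrite /h1 ifF//.
  by apply/negbTE; apply/negP => /set_mem.
have e2 : \int[P]_w h2 w = \int[P]_w G w.
  apply: ae_eq_integral => //; apply: aeN => w Nw; rewrite /h2 ifF//.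
  by apply/negbTE; apply/negP => /set_mem.
apply/eqP; rewrite eq_le; apply/andP; split.
  rewrite -e2; apply: le_int_nonmeas => // w; rewrite /h2.
  by case: ifPn => [_|/negP wN]; [exact: leey|rewrite FG// => /mem_set].
rewrite -e1; apply: le_int_nonmeas => [w|w]; rewrite /h1.
  by case: ifPn.
by case: ifPn => [_|/negP wN]; [exact: F0|rewrite FG// => /mem_set].
Qed.

Lemma tonelli_key (Eo Em : O -> Rn R n -> R) (r : R) :
  measurable_fun setT (fun p : (O * Rn R n)%type => Em p.1 p.2) ->
  (forall w s, ~ N w -> Eo w s = Em w s) ->
  \int[P]_w mu [set s | (Eo w s <= r)%R] = \int[mu]_s P [set w | (Em w s <= r)%R].
Proof.
move=> mEm EoEm.
pose A := [set p : (O * Rn R n)%type | (Em p.1 p.2 <= r)%R].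
have mA : measurable A by exact: mset_le.
have h := indic_fubini_tonelli P mu mA.
rewrite indic_fubini_tonelli_FE// indic_fubini_tonelli_GE// in h.
have -> : (fun s => P [set w | (Em w s <= r)%R]) = P \o ysection A.
  apply/funext => s /=; congr (P _); apply/seteqP; split => w /=;
  by rewrite /ysection /= inE.
rewrite -h; apply: ae_int.
- exact: measurable_fun_xsection.
- by move=> w.
- by move=> w.
move=> w Nw /=; congr (mu _); apply/seteqP; split => s /=;
  by rewrite /xsection /= inE /A /= EoEm.
Qed.

End tonelli.

Section main.
Variables (R : realType) (dO : measure_display) (O : measurableType dO).
Variables (P : probability O R) (n d : nat).
Variables (X : 'I_d -> Rn R n -> O -> R) (f : Rn R n -> 'rV[R]_d).
Variable (mu : probability (Rn R n) R).
Hypothesis mX : forall i t, measurable_fun setT (X i t).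
Variable N : set O.
Hypotheses (mN : measurable N) (PN0 : P N = 0%E).
Hypothesis cX : forall w, ~ N w -> forall i, continuous (fun t : 'rV[R]_n => X i t w).
Hypothesis mf : borel_map f.

Definition Y i t w := X i t w * \1_(~` N) w.

Lemma Y_eq w : ~ N w -> forall i t, Y i t w = X i t w.
Proof. by move=> Nw i t; rewrite /Y indicE mem_set// mulr1. Qed.

Lemma mY i t : measurable_fun setT (Y i t).
Proof. apply: measurable_funM => //; apply: measurable_indic; exact: measurableC. Qed.

Lemma cY w i : continuous (fun t : 'rV[R]_n => Y i t w).
Proof.
have [Nw|Nw] := pselect (N w).
  rewrite /Y indicE memNset ?mulr0/=; last by [].
  under eq_fun do rewrite mulr0; exact: cst_continuous.
rewrite /Y indicE mem_set//; under eq_fun do rewrite mulr1; exact: cX.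
Qed.

Lemma Xf_eq w s : ~ N w -> Xf Y f s w = Xf X f s w.
Proof. by move=> Nw; apply/rowP => j; rewrite !mxE Y_eq. Qed.

Lemma graph_eq w s : ~ N w -> graphXf Y f s w = graphXf X f s w.
Proof. by move=> Nw; rewrite /graphXf Xf_eq. Qed.

Lemma mXfY j : measurable_fun setT (fun p : (O * Rn R n)%type => Xf Y f p.2 p.1 0 j).
Proof.
rewrite /Xf; under eq_fun do rewrite mxE.
apply: measurable_funD.
  exact: (@caratheodory R dO O n (fun w s => Y j s w) (fun w => cY w j) (fun s => mY j s)).
exact: measurableT_comp (mf j) measurable_snd.
Qed.

Lemma mXfYt t j : measurable_fun setT (fun p : (O * Rn R n)%type => Xf Y f t p.1 0 j).
Proof.
rewrite /Xf; under eq_fun do rewrite mxE.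
apply: measurable_funD => //; exact: measurableT_comp (mY j t) measurable_fst.
Qed.

Lemma mXfYw s j : measurable_fun setT (fun w => Xf Y f s w 0 j).
Proof.
rewrite /Xf; under eq_fun do rewrite mxE.
by apply: measurable_funD => //; exact: mY.
Qed.

Lemma mgrY j : measurable_fun setT (fun p : (O * Rn R n)%type => graphXf Y f p.2 p.1 0 j).
Proof.
rewrite /graphXf; rewrite -(splitK j); case: (fintype.split j) => k /=.
  under eq_fun do rewrite row_mxEl.
  exact: (@caratheodory R dO O n (fun w s => (s : 'rV[R]_n) 0 k) (fun w => @coord_continuous R 1 n 0 k) (fun s => measurable_cst _)).
under eq_fun do rewrite row_mxEr; exact: mXfY.
Qed.

Lemma mgrYt t j : measurable_fun setT (fun p : (O * Rn R n)%type => graphXf Y f t p.1 0 j).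
Proof.
rewrite /graphXf; rewrite -(splitK j); case: (fintype.split j) => k /=.
  under eq_fun do rewrite row_mxEl; exact: measurable_cst.
under eq_fun do rewrite row_mxEr; exact: mXfYt.
Qed.

Lemma mgrYw s j : measurable_fun setT (fun w => graphXf Y f s w 0 j).
Proof.
rewrite /graphXf; rewrite -(splitK j); case: (fintype.split j) => k /=.
  under eq_fun do rewrite row_mxEl; exact: measurable_cst.
under eq_fun do rewrite row_mxEr; exact: mXfYw.
Qed.

Lemma mXfXw s j : measurable_fun setT (fun w => Xf X f s w 0 j).
Proof.
rewrite /Xf; under eq_fun do rewrite mxE.
by apply: measurable_funD => //; exact: mX.
Qed.

Lemma coordsB {d'} {T : measurableType d'} m (U V : T -> 'rV[R]_m) :
  (forall j, measurable_fun setT (fun p => U p 0 j)) ->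
  (forall j, measurable_fun setT (fun p => V p 0 j)) ->
  forall j, measurable_fun setT (fun p => (V p - U p) 0 j).
Proof.
move=> mU mV j; under eq_fun do rewrite !mxE.
exact: measurable_funB.
Qed.

Lemma null_le (A B : set O) : measurable A -> measurable B ->
  (forall w, ~ N w -> A w -> B w) -> (P A <= P B)%E.
Proof.
move=> mA mB AB.
apply: (@le_trans _ _ (P (B `|` N))).
  apply: le_measure; rewrite ?inE//; first exact: measurableU.
  move=> w Aw; have [Nw|Nw] := pselect (N w); [by right|left; exact: AB].
by rewrite measureU0.
Qed.

Lemma pw_sandwich m (U V : O -> 'rV[R]_m) r : (0 < m)%N -> 0 < r ->
  (forall j, measurable_fun setT (fun p => U p 0 j)) ->
  (forall j, measurable_fun setT (fun p => V p 0 j)) ->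
  (P [set w | (`|V w - U w| <= r / m%:R)%R] <= P [set w | (eucl_dist (U w) (V w) <= r)%R])%E /\
  (P [set w | (eucl_dist (U w) (V w) <= r)%R] <= P [set w | (`|V w - U w| <= r)%R])%E.
Proof.
move=> m0 r0 mU mV.
have mE : measurable [set w | eucl_dist (U w) (V w) <= r].
  by apply: mset_le; exact: meas_eucl.
have mM rho : 0 <= rho -> measurable [set w | `|V w - U w| <= rho].
  by move=> rho0; apply: meas_normle => //; exact: coordsB.
have m0' : 0 < m%:R :> R by rewrite ltr0n.
split; apply: le_measure; rewrite ?inE//; try apply: mM; rewrite ?divr_ge0 ?ltW//.
  move=> w /= H; apply: (le_trans (eucl_le_norm (U w) (V w) m0)).
  rewrite distrC; apply: (le_trans (ler_wpM2l (ltW m0') H)).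
  by rewrite mulrC divfK // gt_eqF.
move=> w /= H; apply: le_trans H; rewrite distrC; exact: eucl_ge_norm.
Qed.

Lemma HXf_E t s rho : 0 <= rho ->
  (HXf P X f t s rho)%:E = P [set w | `|Xf Y f t w - Xf Y f s w| <= rho].
Proof.
move=> rho0.
have mA : measurable [set w | `|Xf X f t w - Xf X f s w| <= rho].
  by apply: meas_normle => //; apply: coordsB => j; exact: mXfXw.
have mB : measurable [set w | `|Xf Y f t w - Xf Y f s w| <= rho].
  by apply: meas_normle => //; apply: coordsB => j; exact: mXfYw.
rewrite /HXf fineK; last exact: fin_num_measure.
apply/eqP; rewrite eq_le; apply/andP; split; apply: null_le => // w Nw /=;
  by rewrite !Xf_eq.
Qed.

Hypotheses (n0 : (0 < n)%N) (d0 : (0 < d)%N).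

Lemma HXf_ge0 t s r : (0 <= (HXf P X f t s r)%:E)%E.
Proof. by rewrite lee_fin /HXf fine_ge0. Qed.

Lemma claim1 t r : 0 < r ->
  (\int[mu]_s (HXf P X f t s (r / d%:R))%:E <=
     \int[P]_w mu [set s | (eucl_dist (Xf X f s w) (Xf X f t w) <= r)%R])%E /\
  (\int[P]_w mu [set s | (eucl_dist (Xf X f s w) (Xf X f t w) <= r)%R] <=
     \int[mu]_s (HXf P X f t s r)%:E)%E.
Proof.
move=> r0.
have := @tonelli_key R dO O P n mu N mN PN0
  (fun w s => eucl_dist (Xf X f s w) (Xf X f t w))
  (fun w s => eucl_dist (Xf Y f s w) (Xf Y f t w)) r.
move=> /= ->; last 2 first.
- apply: meas_eucl => j; [exact: mXfY|exact: mXfYt].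
- by move=> w s Nw; rewrite !Xf_eq.
have d0' : 0 < d%:R :> R by rewrite ltr0n.
have rd0 : 0 <= r / d%:R by rewrite divr_ge0 ?ler0n ?ltW.
split; apply: le_int_nonmeas.
- by move=> s; rewrite HXf_E.
- move=> s; rewrite HXf_E//.
  exact: (@pw_sandwich d (fun w => Xf Y f s w) (fun w => Xf Y f t w) r d0 r0
     (mXfYw s) (mXfYw t)).1.
- by [].
- move=> s; rewrite HXf_E; last exact: ltW.
  exact: (@pw_sandwich d (fun w => Xf Y f s w) (fun w => Xf Y f t w) r d0 r0
     (mXfYw s) (mXfYw t)).2.
Qed.

Lemma graph_patch t s rho : 0 <= rho ->
  ((fun s => (HXf P X f t s rho)%:E) \_ (Dball t rho)) s =
  P [set w | (`|graphXf Y f t w - graphXf Y f s w| <= rho)%R].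
Proof.
move=> rho0.
have gdiff w : graphXf Y f t w - graphXf Y f s w =
    row_mx ((t : 'rV[R]_n) - s) (Xf Y f t w - Xf Y f s w).
  by rewrite /graphXf opp_row_mx add_row_mx.
rewrite /patch; case: ifPn => [/set_mem Ds | /negP Ds].
  rewrite HXf_E//; congr (P _); apply/seteqP; split => w /=; rewrite gdiff row_mx_normP//.
    by move=> H; split => //; rewrite distrC.
  by move=> [].
rewrite (_ : [set w | _] = set0) ?measure0//; apply/seteqP; split => w //=.
rewrite gdiff row_mx_normP// => -[H _]; apply: Ds; apply/mem_set.
by rewrite /Dball /= distrC.
Qed.

Lemma claim2 t r : 0 < r ->
  (\int[mu]_(s in Dball t (r / (n + d)%:R)) (HXf P X f t s (r / (n + d)%:R))%:E <=
     \int[P]_w mu [set s | (eucl_dist (graphXf X f s w) (graphXf X f t w) <= r)%R])%E /\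
  (\int[P]_w mu [set s | (eucl_dist (graphXf X f s w) (graphXf X f t w) <= r)%R] <=
     \int[mu]_(s in Dball t r) (HXf P X f t s r)%:E)%E.
Proof.
move=> r0.
have := @tonelli_key R dO O P n mu N mN PN0
  (fun w s => eucl_dist (graphXf X f s w) (graphXf X f t w))
  (fun w s => eucl_dist (graphXf Y f s w) (graphXf Y f t w)) r.
move=> /= ->; last 2 first.
- apply: meas_eucl => j; [exact: mgrY|exact: mgrYt].
- by move=> w s Nw; rewrite !graph_eq.
have nd0 : (0 < n + d)%N by rewrite addn_gt0 n0.
have rd0 : 0 <= r / (n + d)%:R by rewrite divr_ge0 ?ler0n ?ltW.
rewrite (integral_mkcond (Dball t r)) (integral_mkcond (Dball t (r / (n + d)%:R))).
split; apply: le_int_nonmeas.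
- by move=> s; rewrite graph_patch.
- move=> s; rewrite graph_patch//.
  exact: (@pw_sandwich (n + d) (fun w => graphXf Y f s w) (fun w => graphXf Y f t w) r nd0 r0
     (mgrYw s) (mgrYw t)).1.
- by [].
- move=> s; rewrite graph_patch; last exact: ltW.
  exact: (@pw_sandwich (n + d) (fun w => graphXf Y f s w) (fun w => graphXf Y f t w) r nd0 r0
     (mgrYw s) (mgrYw t)).2.
Qed.

Lemma main1 : dimP P mu (Xf X f) = dimH P X f mu (fun _ _ => setT).
Proof.
rewrite /dimP /dimH; congr (ereal_sup (image _ _)).
apply/funext => g /=; apply/propext.
have d1 : 1 <= d%:R :> R by rewrite ler1n.
have key t := @liminf_sandwich R
  (fun r => (\int[P]_w mu [set s | (eucl_dist (Xf X f s w) (Xf X f t w) <= r)%R])%E)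
  (fun r => (\int[mu]_s (HXf P X f t s r)%:E)%E) d%:R g d1
  (fun r _ => integral_ge0 _ (fun w _ => measure_ge0 _ _))
  (fun r _ => integral_ge0 _ (fun s _ => HXf_ge0 t s r))
  (fun r r0 => (claim1 t r r0).1) (fun r r0 => (claim1 t r r0).2).
split; apply: filterS => t; by move/(key t).
Qed.

Lemma main2 : dimP P mu (graphXf X f) = dimH P X f mu Dball.
Proof.
rewrite /dimP /dimH; congr (ereal_sup (image _ _)).
apply/funext => g /=; apply/propext.
have c1 : 1 <= (n + d)%:R :> R by rewrite ler1n addn_gt0 n0.
have key t := @liminf_sandwich R
  (fun r => (\int[P]_w mu [set s | (eucl_dist (graphXf X f s w) (graphXf X f t w) <= r)%R])%E)
  (fun r => (\int[mu]_(s in Dball t r) (HXf P X f t s r)%:E)%E) (n + d)%:R g c1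
  (fun r _ => integral_ge0 _ (fun w _ => measure_ge0 _ _))
  (fun r _ => integral_ge0 _ (fun s _ => HXf_ge0 t s r))
  (fun r r0 => (claim2 t r r0).1) (fun r r0 => (claim2 t r r0).2).
split; apply: filterS => t; by move/(key t).
Qed.

End main.

Theorem corollary3p8 (R : realType) (dO : measure_display) (O : measurableType dO)
  (P : probability O R) (n d : nat)
  (X : 'I_d -> Rn R n -> O -> R) (f : Rn R n -> 'rV[R]_d)
  (A : set (Rn R n)) (mu : probability (Rn R n) R) :
  (0 < n)%N -> (0 < d)%N ->
  gaussian_field P X -> indep_coords P X -> centered_field P X ->
  as_continuous P X -> borel_map f -> analytic_set A -> regular_on P X A ->
  in_Pc A mu ->
  dimP P mu (Xf X f) = dimH P X f mu (fun _ _ => setT) /\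
  dimP P mu (graphXf X f) = dimH P X f mu Dball.
Proof.
move=> n0 d0 hG _ _ hC mf _ _ _.
have mX : forall i t, measurable_fun setT (X i t).
  move=> i t; have [m [sd [mG _]]] := hG [:: (i, t, 1%R)].
  move: mG; rewrite (_ : (fun w => _) = X i t)//.
  by apply/funext => w; rewrite big_seq1 /= mul1r.
case: hC => N [mN PN0 sub].
have cX : forall w, ~ N w -> forall i, continuous (fun t : 'rV[R]_n => X i t w).
  move=> w Nw; have [//|H] := pselect (forall i, continuous (fun t : 'rV[R]_n => X i t w)).
  by exfalso; apply: Nw; apply: sub.
split.
  exact: (@main1 R dO O P n d X f mu mX N mN PN0 cX mf d0).
exact: (@main2 R dO O P n d X f mu mX N mN PN0 cX mf n0).
Qed.
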